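(* Let $n\ge1$ be an integer and write $n=2m+p$ with integers $m\ge0$ and $p\in\{0,1\}$ (when $p=0$ we have $m\ge1$). Let $R_n$ be the $n$-row rhombus of coins and $R_n^{\mathrm{flip}}$ its horizontal mirror image, as defined in the context. Then the minimum number of moves needed to turn $R_n$ into a translate of $R_n^{\mathrm{flip}}$ is $$\mu(R_n,R_n^{\mathrm{flip}})=\begin{cases}2T_m=m^2+m, & p=1,\\ T_m+T_{m-1}=m^2, & p=0.\end{cases}$$ In both cases this equals $\lfloor n^2/4\rfloor$.
   Context: For an integer $k\ge 0$, $T_k=k(k+1)/2$ is the $k$-th triangular number, so $T_0=0$. Coins are placed at points of the triangular lattice $L=\{a\mathbf u+b\mathbf v: a,b\in\mathbb Z\}\subset\mathbb R^2$, where $\mathbf u=(1,0)$ and $\mathbf v=(1/2,\sqrt3/2)$. The $n$-row rhombus of coins is $R_n=\{a\mathbf u+b\mathbf v: a,b\in\{0,1,\dots,n-1\}\}$. It has $n^2$ coins. Its horizontal flip is $R_n^{\mathrm{flip}}=\{(-x,y):(x,y)\in R_n\}$, the mirror image of $R_n$ in a vertical line. This set is again contained in $L$. A move takes a single coin and places it at any other position. For finite sets $S,S'\subset\mathbb R^2$ with $|S|=|S'|$, the minimum number of moves to transform $S$ into some translate of $S'$ is $\mu(S,S')=|S|-\max_{t\in\mathbb R^2}|S\cap(S'+t)|$. Coins in the overlap stay in place, and each remaining coin is moved once. *)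

(* Defs.v *)
From Stdlib Require Import Reals Lra Lia List Arith.
Import ListNotations.
Open Scope R_scope.

Definition point : Type := (R * R)%type.

Definition pt_eq_dec (p q : point) : {p = q} + {p <> q}.
Proof.
  destruct p as [x1 y1], q as [x2 y2].
  destruct (Req_EM_T x1 x2) as [e1|n1]; [destruct (Req_EM_T y1 y2) as [e2|n2]|].
  - left; subst; reflexivity.
  - right; intro H; inversion H; contradiction.
  - right; intro H; inversion H; contradiction.
Defined.

Definition T (k : nat) : nat := (k * (k + 1) / 2)%nat.

Definition u : point := (1, 0).
Definition v : point := (1 / 2, sqrt 3 / 2).
Definition lat (a b : nat) : point :=
  (INR a * fst u + INR b * fst v, INR a * snd u + INR b * snd v).

(* R_n = { a u + b v : a, b in {0,...,n-1} }, listed without repetition *)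
Definition rhombus (n : nat) : list point :=
  flat_map (fun a => map (fun b => lat a b) (seq 0 n)) (seq 0 n).

Definition flip (p : point) : point := (- fst p, snd p).
Definition rhombus_flip (n : nat) : list point := map flip (rhombus n).

Definition translate (t : point) (p : point) : point :=
  (fst p + fst t, snd p + snd t).

Definition overlap (S S' : list point) (t : point) : nat :=
  length (filter (fun p => if in_dec pt_eq_dec p (map (translate t) S')
                           then true else false) S).

Definition is_max_overlap (S S' : list point) (M : nat) : Prop :=
  (exists t : point, overlap S S' t = M) /\
  (forall t : point, (overlap S S' t <= M)%nat).

Definition is_mu (S S' : list point) (k : nat) : Prop :=
  exists M, is_max_overlap S S' M /\ k = (length S - M)%nat.

(* Main.v *)
Require Import Defs.
From Stdlib Require Import Reals List Arith.
From Stdlib Require Import Lra Lia ZArith.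
From Stdlib Require Import Lia Arith ZArith List.
Import ListNotations.
Local Open Scope nat_scope.

Lemma len_filter_flat_map {A B} (f: B->bool) (g: A -> list B) l :
  length (filter f (flat_map g l)) = list_sum (map (fun x => length (filter f (g x))) l).
Proof. induction l; simpl; [reflexivity|]. rewrite filter_app, length_app, IHl. reflexivity. Qed.

Lemma len_filter_map {A B} (f: B->bool) (h:A->B) l :
  length (filter f (map h l)) = length (filter (fun x => f (h x)) l).
Proof. induction l; simpl; [reflexivity|]. destruct (f (h a)); simpl; congruence. Qed.

Lemma filter_mono {A} (f g : A->bool) l :
  (forall x, In x l -> f x = true -> g x = true) -> length (filter f l) <= length (filter g l).
Proof.
  induction l; simpl; intros H; [lia|].
  assert (IH := IHl (fun x Hx => H x (or_intror Hx))).
  destruct (f a) eqn:E.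
  - rewrite (H a (or_introl eq_refl) E). simpl. lia.
  - destruct (g a); simpl; lia.
Qed.

Lemma list_sum_mono {A} (F G : A -> nat) l :
  (forall x, In x l -> F x <= G x) -> list_sum (map F l) <= list_sum (map G l).
Proof.
  induction l; simpl; intros H; [lia|].
  assert (IH := IHl (fun x Hx => H x (or_intror Hx))). specialize (H a (or_introl eq_refl)). lia.
Qed.

Lemma list_sum_const {A} (c : nat) (l : list A) : list_sum (map (fun _ => c) l) = c * length l.
Proof. induction l; simpl; lia. Qed.

Definition ib (lo hi : Z) (b : nat) : bool := (Z.leb lo (Z.of_nat b) && Z.leb (Z.of_nat b) hi)%bool.

Lemma ib_count lo hi k : forall s,
  Z.of_nat (length (filter (ib lo hi) (seq s k))) =
  Z.max 0 (Z.min hi (Z.of_nat s + Z.of_nat k - 1) + 1 - Z.max (Z.of_nat s) lo).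
Proof.
  induction k; intros s; simpl.
  - lia.
  - specialize (IHk (S s)).
    unfold ib at 1. destruct (Z.leb_spec lo (Z.of_nat s)); destruct (Z.leb_spec (Z.of_nat s) hi);
    simpl; try rewrite Nat2Z.inj_succ; rewrite ?IHk; lia.
Qed.

Lemma div4_step k : (S (S k)) * (S (S k)) / 4 = k * k / 4 + S k.
Proof.
  replace (S (S k) * S (S k)) with (k*k + S k * 4) by lia.
  apply Nat.div_add. lia.
Qed.

Lemma sum_le n (F : nat -> nat) :
  (forall j, 2*j+2 <= n -> F j + F (n-1-j) + (n-1-2*j) <= 2*n) ->
  (forall j, 2*j+1 = n -> F j <= n) ->
  forall k i, 2*i+k = n -> 2*list_sum (map F (seq i k)) + 2*(k*k/4) <= 2*n*k.
Proof.
  intros H2 H1.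
  assert (forall k, (forall i, 2*i+k = n -> 2*list_sum (map F (seq i k)) + 2*(k*k/4) <= 2*n*k)
                 /\ (forall i, 2*i+S k = n -> 2*list_sum (map F (seq i (S k))) + 2*(S k*S k/4) <= 2*n*S k)).
  { induction k as [|k [IHa IHb]].
    - split; intros i Hi; simpl.
      + lia.
      + specialize (H1 i Hi). simpl. lia.
    - split; [exact IHb|]. intros i Hi.
      change (seq i (S (S k))) with (i :: seq (S i) (S k)).
      rewrite seq_S, map_cons, map_app. simpl list_sum. rewrite list_sum_app. simpl list_sum.
      rewrite div4_step.
      specialize (IHa (S i) ltac:(lia)).
      specialize (H2 i ltac:(lia)).
      replace (S (i + k)) with (n-1-i) by lia. nia. }
  intros k i Hi. apply (proj1 (H k)). exact Hi.
Qed.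

Lemma sum_ge n (F : nat -> nat) :
  (forall j, 2*j+2 <= n -> F j + F (n-1-j) + (n-1-2*j) >= 2*n) ->
  (forall j, 2*j+1 = n -> F j >= n) ->
  forall k i, 2*i+k = n -> 2*list_sum (map F (seq i k)) + 2*(k*k/4) >= 2*n*k.
Proof.
  intros H2 H1.
  assert (forall k, (forall i, 2*i+k = n -> 2*list_sum (map F (seq i k)) + 2*(k*k/4) >= 2*n*k)
                 /\ (forall i, 2*i+S k = n -> 2*list_sum (map F (seq i (S k))) + 2*(S k*S k/4) >= 2*n*S k)).
  { induction k as [|k [IHa IHb]].
    - split; intros i Hi; simpl.
      + lia.
      + specialize (H1 i Hi). simpl. lia.
    - split; [exact IHb|]. intros i Hi.
      change (seq i (S (S k))) with (i :: seq (S i) (S k)).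
      rewrite seq_S, map_cons, map_app. simpl list_sum. rewrite list_sum_app. simpl list_sum.
      rewrite div4_step.
      specialize (IHa (S i) ltac:(lia)).
      specialize (H2 i ltac:(lia)).
      replace (S (i + k)) with (n-1-i) by lia. nia. }
  intros k i Hi. apply (proj1 (H k)). exact Hi.
Qed.
From Stdlib Require Import Reals Lra Lia List Arith ZArith.

Local Open Scope R_scope.
Lemma lat_eq_key a b a' b' a0 b0 a0' b0' t :
  lat a b = translate t (flip (lat a' b')) ->
  lat a0 b0 = translate t (flip (lat a0' b0')) ->
  (a + b + a' = a0 + b0 + a0')%nat.
Proof.
  unfold lat, translate, flip, u, v; simpl. intros E1 E2.
  injection E1 as X1 Y1. injection E2 as X2 Y2.
  assert (Hs : sqrt 3 / 2 > 0) by (assert (0 < sqrt 3) by (apply sqrt_lt_R0; lra); lra).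
  set (s := sqrt 3 / 2) in *.
  assert (E : (INR b - INR b' - INR b0 + INR b0') * s = 0) by nra.
  apply Rmult_integral in E. destruct E as [E|E]; [|lra].
  apply INR_eq. rewrite !plus_INR. lra.
Qed.

Lemma in_rhombus n p : In p (rhombus n) <-> exists a b, (a < n)%nat /\ (b < n)%nat /\ p = lat a b.
Proof.
  unfold rhombus. rewrite in_flat_map. split.
  - intros [a [Ha Hp]]. apply in_map_iff in Hp. destruct Hp as [b [Hb Hb']].
    apply in_seq in Ha. apply in_seq in Hb'. exists a, b. repeat split; auto; lia.
  - intros [a [b [Ha [Hb ->]]]]. exists a. split; [apply in_seq; lia|].
    apply in_map_iff. exists b. split; auto. apply in_seq; lia.
Qed.

Definition fm n t : point -> bool := fun p =>
  if in_dec pt_eq_dec p (map (translate t) (rhombus_flip n)) then true else false.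

Lemma fm_true n t p : fm n t p = true <->
  exists a' b', (a' < n)%nat /\ (b' < n)%nat /\ p = translate t (flip (lat a' b')).
Proof.
  unfold fm. destruct (in_dec _ _ _) as [H|H]; split; try discriminate.
  - intros _. apply in_map_iff in H. destruct H as [q [Hq Hin]].
    unfold rhombus_flip in Hin. apply in_map_iff in Hin. destruct Hin as [r [Hr Hin]].
    apply in_rhombus in Hin. destruct Hin as [a' [b' [Ha [Hb ->]]]].
    exists a', b'. subst. auto.
  - intros _. reflexivity.
  - intros [a' [b' [Ha [Hb ->]]]]. exfalso. apply H. apply in_map. unfold rhombus_flip.
    apply in_map. apply in_rhombus. eauto.
Qed.

Lemma overlap_sum n t :
  overlap (rhombus n) (rhombus_flip n) t =
  list_sum (map (fun a => length (filter (fun b => fm n t (lat a b)) (seq 0 n))) (seq 0 n)).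
Proof.
  change (overlap (rhombus n) (rhombus_flip n) t) with (length (filter (fm n t) (rhombus n))).
  unfold rhombus at 1. rewrite len_filter_flat_map. f_equal. apply map_ext. intro a.
  apply len_filter_map.
Qed.

Lemma upper n t : (overlap (rhombus n) (rhombus_flip n) t <= n*n - n*n/4)%nat.
Proof.
  destruct (filter (fm n t) (rhombus n)) as [|p rest] eqn:Ef.
  { change (overlap (rhombus n) (rhombus_flip n) t) with (length (filter (fm n t) (rhombus n))).
    rewrite Ef. simpl. lia. }
  assert (Hp : In p (filter (fm n t) (rhombus n))) by (rewrite Ef; left; reflexivity).
  apply filter_In in Hp. destruct Hp as [Hp Hf].
  apply in_rhombus in Hp. destruct Hp as [a0 [b0 [Ha0 [Hb0 ->]]]].
  apply fm_true in Hf. destruct Hf as [a0' [b0' [Ha0' [Hb0' E0]]]].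
  set (K := (a0 + b0 + a0')%nat).
  set (F := fun a => length (filter (fun b => fm n t (lat a b)) (seq 0 n))).
  assert (HF : forall a, (Z.of_nat (F a) <= Z.max 0 (Z.of_nat n - Z.abs (Z.of_nat K - Z.of_nat n + 1 - Z.of_nat a)))%Z).
  { intro a. unfold F.
    assert (Hle := filter_mono (fun b => fm n t (lat a b))
              (ib (Z.of_nat K - Z.of_nat n + 1 - Z.of_nat a) (Z.of_nat K - Z.of_nat a)) (seq 0 n)).
    assert (Hc := ib_count (Z.of_nat K - Z.of_nat n + 1 - Z.of_nat a) (Z.of_nat K - Z.of_nat a) n 0).
    assert (Hle' : (length (filter (fun b => fm n t (lat a b)) (seq 0 n)) <=
       length (filter (ib (Z.of_nat K - Z.of_nat n + 1 - Z.of_nat a) (Z.of_nat K - Z.of_nat a)) (seq 0 n)))%nat).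
    { apply Hle. intros b Hb Hfb. apply in_seq in Hb.
      apply fm_true in Hfb. destruct Hfb as [a' [b' [Ha' [Hb' E]]]].
      pose proof (lat_eq_key _ _ _ _ _ _ _ _ _ E E0) as Hk. fold K in Hk.
      unfold ib. apply andb_true_intro. split; apply Z.leb_le; lia. }
    lia. }
  rewrite overlap_sum. fold F.
  assert (Hs := sum_le n F).
  assert (H : (2 * list_sum (map F (seq 0 n)) + 2 * (n * n / 4) <= 2 * n * n)%nat).
  { apply Hs; [| |lia].
    - intros j Hj. pose proof (HF j). pose proof (HF (n-1-j)%nat). lia.
    - intros j Hj. pose proof (HF j). lia. }
  pose proof (Nat.div_le_upper_bound (n*n) 4 (n*n)). lia.
Qed.

Lemma lower n : exists t, (overlap (rhombus n) (rhombus_flip n) t >= n*n - n*n/4)%nat.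
Proof.
  set (K := (n/2 + n - 1)%nat).
  pose proof (Nat.div_mod n 2 ltac:(lia)) as Hdm. pose proof (Nat.mod_upper_bound n 2 ltac:(lia)) as Hmb.
  exists (INR K, 0%R).
  set (F := fun a => length (filter (fun b => fm n (INR K, 0%R) (lat a b)) (seq 0 n))).
  assert (HF : forall a, (a < n)%nat -> (Z.of_nat (F a) = Z.max 0 (Z.of_nat n - Z.abs (Z.of_nat (n/2) - Z.of_nat a)))%Z).
  { intros a Ha. unfold F.
    rewrite (filter_ext_in _ (ib (Z.of_nat (n/2) - Z.of_nat a) (Z.of_nat K - Z.of_nat a))).
    - rewrite ib_count. lia.
    - intros b Hb. apply in_seq in Hb.
      destruct (ib _ _ b) eqn:Eb.
      + apply fm_true. unfold ib in Eb. apply andb_prop in Eb. destruct Eb as [E1 E2].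
        apply Z.leb_le in E1. apply Z.leb_le in E2.
        exists (K - a - b)%nat, b. split; [lia|]. split; [lia|].
        unfold lat, translate, flip, u, v; simpl. rewrite !minus_INR by lia.
        f_equal; lra.
      + destruct (fm _ _ _) eqn:Ef; [|reflexivity]. exfalso.
        apply fm_true in Ef. destruct Ef as [a' [b' [Ha' [Hb' E]]]].
        assert (E0 : lat (n/2) 0 = translate (INR K, 0%R) (flip (lat (n-1) 0))).
        { unfold lat, translate, flip, u, v, K; simpl. rewrite !minus_INR by lia. rewrite plus_INR.
          simpl. f_equal; lra. }
        pose proof (lat_eq_key _ _ _ _ _ _ _ _ _ E E0) as Hk.
        unfold ib in Eb. apply Bool.andb_false_iff in Eb.
        destruct Eb as [Eb|Eb]; apply Z.leb_gt in Eb; unfold K in *; lia. }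
  rewrite overlap_sum. fold F.
  assert (H : (2 * list_sum (map F (seq 0 n)) + 2 * (n * n / 4) >= 2 * n * n)%nat).
  { apply (sum_ge n F); [| |lia].
    - intros j Hj. pose proof (HF j ltac:(lia)). pose proof (HF (n-1-j)%nat ltac:(lia)). lia.
    - intros j Hj. pose proof (HF j ltac:(lia)). lia. }
  lia.
Qed.

Lemma T_double m : (2 * T m = m * (m + 1))%nat.
Proof.
  induction m; [reflexivity|].
  assert (T (S m) = T m + S m)%nat.
  { unfold T. replace (S m * (S m + 1))%nat with (m * (m+1) + S m * 2)%nat by lia.
    apply Nat.div_add. lia. }
  lia.
Qed.

Lemma len_rhombus n : length (rhombus n) = (n * n)%nat.
Proof.
  unfold rhombus. induction (seq 0 n) as [|a l IH] eqn:El.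
Abort.

Lemma len_flat n : forall l : list nat, length (flat_map (fun a => map (fun b => lat a b) (seq 0 n)) l) = (n * length l)%nat.
Proof. induction l; simpl; [lia|]. rewrite length_app, length_map, length_seq, IHl. lia. Qed.

Theorem mainTheorem2 (n m p : nat) (hn : (1 <= n)%nat) (hp : (p <= 1)%nat)
  (hnmp : n = (2 * m + p)%nat) :
  is_mu (rhombus n) (rhombus_flip n)
    (if Nat.eqb p 1 then (2 * T m)%nat else (T m + T (m - 1))%nat) /\
  (if Nat.eqb p 1 then (2 * T m)%nat else (T m + T (m - 1))%nat)
    = (n * n / 4)%nat.
Proof.
  assert (Hq : (if Nat.eqb p 1 then (2 * T m)%nat else (T m + T (m - 1))%nat) = (n * n / 4)%nat).
  { pose proof (T_double m). pose proof (T_double (m-1)).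
    destruct (Nat.eqb_spec p 1).
    - subst. replace ((2*m+1)*(2*m+1))%nat with (1 + (m*(m+1))*4)%nat by lia.
      rewrite Nat.div_add by lia. simpl. lia.
    - assert (p = 0%nat) by lia. subst.
      replace ((2*m+0)*(2*m+0))%nat with (0 + (m*m)*4)%nat by lia.
      rewrite Nat.div_add by lia. simpl. destruct m; [lia|].
      replace (S m - 1)%nat with m in * by lia. nia. }
  split; [|exact Hq]. rewrite Hq.
  exists (n*n - n*n/4)%nat. split.
  - destruct (lower n) as [t Ht]. split.
    + exists t. pose proof (upper n t). lia.
    + apply upper.
  - unfold rhombus. rewrite len_flat, length_seq.
    pose proof (Nat.div_le_upper_bound (n*n) 4 (n*n)). lia.
Qed.
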